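(* Let $\psi\in(-\pi,\pi]$ and $\tau>0$. Then for every $(a,w)\in D_c$ and every $s>0$, $(sa,sw)\in\Gamma_c(\psi;\tau)$ if and only if $s = \frac{1}{\tau}\tau_c(a,w)$ and $\operatorname{Arg}(w) = \psi$.
   Context: $\operatorname{Arg}(w)\in(-\pi,\pi]$ is the principal argument; $\arccos:[-1,1]\to[0,\pi]$. $D_c := \{(a,w)\in\mathbb{R}\times(\mathbb{C}\setminus\{0\}):\operatorname{Re}(w)<a<|w|\}$; $\tau_c(a,w) := \frac{1}{\sqrt{|w|^2-a^2}}[|\operatorname{Arg}(w)|-\arccos(a/|w|)]$. For $\Omega\neq0$ with $\tau\Omega-\psi\notin\pi\mathbb{Z}$: $a(\Omega,\psi;\tau) := -\Omega\cot(\tau\Omega-\psi)$, $\rho(\Omega,\psi;\tau) := -\Omega/\sin(\tau\Omega-\psi)$. $I_c(\psi) := (0,\psi)$ if $\psi\ge0$ and $(\psi,0)$ if $\psi\le0$. $\Gamma_c(\psi;\tau) := \{(a(\Omega,\psi;\tau),\,\rho(\Omega,\psi;\tau)e^{i\psi}) : \tau\Omega\in I_c(\psi)\}\subset\mathbb{R}\times\mathbb{C}$. *)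

(* Defs.v *)
From Stdlib Require Import Reals Lra.
From Coquelicot Require Import Coquelicot.
Open Scope R_scope.

(* Principal argument Arg(w) in (-PI, PI] of a nonzero complex number w,
   via the standard formula: Arg w = acos(Re w/|w|) if Im w >= 0,
   and -acos(Re w/|w|) if Im w < 0. Stdlib's acos maps [-1,1] onto [0,PI]. *)
Definition Arg (w : C) : R :=
  if Rle_dec 0 (Im w) then acos (Re w / Cmod w) else - acos (Re w / Cmod w).

Definition in_D_c (a : R) (w : C) : Prop :=
  w <> 0%C /\ Re w < a /\ a < Cmod w.

Definition tau_c (a : R) (w : C) : R :=
  / sqrt (Cmod w ^ 2 - a ^ 2) * (Rabs (Arg w) - acos (a / Cmod w)).

Definition a_fun (Om psi tau : R) : R :=
  - Om * (cos (tau * Om - psi) / sin (tau * Om - psi)).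

Definition rho_fun (Om psi tau : R) : R :=
  - Om / sin (tau * Om - psi).

Definition in_I_c (psi x : R) : Prop :=
  (0 <= psi /\ 0 < x < psi) \/ (psi <= 0 /\ psi < x < 0).

Definition cexp_i (psi : R) : C := (cos psi, sin psi).

(* For tau*Om in I_c(psi) with psi in (-PI,PI], Om <> 0 and
   tau*Om - psi is not in PI*Z, so a_fun and rho_fun are well defined there. *)
Definition in_Gamma_c (psi tau : R) (x : R) (z : C) : Prop :=
  exists Om : R, in_I_c psi (tau * Om) /\
    x = a_fun Om psi tau /\ z = (RtoC (rho_fun Om psi tau) * cexp_i psi)%C.

(* Main.v *)
Require Import Defs.
From Stdlib Require Import Reals Lra.
From Coquelicot Require Import Coquelicot.
Open Scope R_scope.

Lemma div_bound (m a : R) : 0 < m -> -m <= a <= m -> -1 <= a/m <= 1.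
Proof.
  intros Hm Ha. assert (E : a / m * m = a) by (field; lra).
  set (c := a/m) in *. split; nra.
Qed.

Lemma sqrt_diff (m a : R) : 0 < m -> -m <= a <= m ->
  sqrt (m ^ 2 - a ^ 2) = m * sin (acos (a / m)).
Proof.
  intros Hm Ha. rewrite sin_acos by (apply div_bound; auto).
  replace (m ^ 2 - a ^ 2) with (m ^ 2 * (1 - (a/m)²)) by (unfold Rsqr; field; lra).
  rewrite sqrt_mult_alt by (apply pow2_ge_0). rewrite sqrt_pow2 by lra. reflexivity.
Qed.

Lemma Cmod_sq (x y : R) : Cmod (x, y) ^ 2 = x ^ 2 + y ^ 2.
Proof. unfold Cmod; simpl. apply pow2_sqrt. nra. Qed.

Lemma polar (w : C) : w <> 0%C ->
  w = (Cmod w * cos (Arg w), Cmod w * sin (Arg w)).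
Proof.
  intros Hw. assert (Hm : 0 < Cmod w) by (apply Cmod_gt_0; auto).
  destruct w as [x y].
  assert (Hb : Rabs x <= Cmod (x,y)) by apply (re_le_Cmod (x,y)).
  assert (Hx : - Cmod (x,y) <= x <= Cmod (x,y)) by (apply Rabs_le_between; auto).
  assert (Hs := sqrt_diff _ _ Hm Hx).
  rewrite Cmod_sq in Hs. replace (x ^ 2 + y ^ 2 - x ^ 2) with (y ^ 2) in Hs by ring.
  assert (Hc := cos_acos _ (div_bound _ _ Hm Hx)).
  unfold Arg, Re, Im; simpl fst; simpl snd.
  destruct (Rle_dec 0 y) as [Hy|Hy].
  - rewrite Hc, <- Hs, sqrt_pow2 by lra. f_equal. field. lra.
  - rewrite cos_neg, sin_neg, Hc. replace (y ^ 2) with ((-y)^2) in Hs by ring.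
    rewrite sqrt_pow2 in Hs by lra. f_equal. field; lra. lra.
Qed.

Lemma Arg_polar (r psi : R) : 0 < r -> -PI < psi <= PI ->
  Cmod (r * cos psi, r * sin psi) = r /\ Arg (r * cos psi, r * sin psi) = psi.
Proof.
  intros Hr Hp.
  assert (Hm : Cmod (r * cos psi, r * sin psi) = r).
  { unfold Cmod; simpl fst; simpl snd.
    replace ((r * cos psi) ^ 2 + (r * sin psi) ^ 2) with (r ^ 2)
      by (rewrite <- (Rmult_1_r (r^2)), <- (sin2_cos2 psi); unfold Rsqr; ring).
    apply sqrt_pow2; lra. }
  split; auto. unfold Arg, Re, Im; rewrite Hm; simpl fst; simpl snd.
  replace (r * cos psi / r) with (cos psi) by (field; lra).
  destruct (Rle_dec 0 psi) as [H0|H0].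
  - destruct (Rle_dec 0 (r * sin psi)) as [_|Hn].
    + apply acos_cos; lra.
    + exfalso. apply Hn. apply Rmult_le_pos; [lra|]. apply sin_ge_0; lra.
  - assert (sin psi < 0) by (apply sin_lt_0_var; lra).
    destruct (Rle_dec 0 (r * sin psi)) as [Hn|_].
    + nra.
    + rewrite <- cos_neg, acos_cos by lra. ring.
Qed.

Lemma Cmult_RtoC (r x y : R) : (RtoC r * (x, y))%C = (r * x, r * y).
Proof. unfold Cmult, RtoC; simpl. f_equal; ring. Qed.

Lemma core (psi tau a s : R) (w : C) : -PI < psi <= PI -> psi <> 0 -> 0 < tau ->
  in_D_c a w -> 0 < s ->
  ((exists Om th, 0 < Om /\ 0 < th < Rabs psi /\ tau * Om = Rabs psi - th /\
     s * a = Om * (cos th / sin th) /\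
     (RtoC s * w)%C = (RtoC (Om / sin th) * cexp_i psi)%C)
  <-> (s = / tau * tau_c a w /\ Arg w = psi)).
Proof.
  intros Hp Hp0 Ht [Hw0 [Hre Ham]] Hs.
  assert (Habs : Rabs psi <= PI) by (apply Rabs_le; lra).
  assert (Habs0 : 0 < Rabs psi) by (apply Rabs_pos_lt; auto).
  assert (Hcabs : cos (Rabs psi) = cos psi).
  { unfold Rabs; destruct (Rcase_abs psi); [apply cos_neg|reflexivity]. }
  split.
  - intros [Om [th [HOm [Hth [Htau [Ha Hz]]]]]].
    assert (Hsin : 0 < sin th) by (apply sin_gt_0; lra).
    set (r := Om / sin th) in *.
    assert (Hr : 0 < r) by (unfold r; apply Rdiv_lt_0_compat; lra).
    destruct w as [x y]. unfold cexp_i in Hz. rewrite !Cmult_RtoC in Hz.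
    injection Hz as Hx Hy.
    assert (Ex : x = r / s * cos psi) by (apply (Rmult_eq_reg_l s); [rewrite Hx; field|]; lra).
    assert (Ey : y = r / s * sin psi) by (apply (Rmult_eq_reg_l s); [rewrite Hy; field|]; lra).
    subst x y.
    assert (Hrs : 0 < r / s) by (apply Rdiv_lt_0_compat; lra).
    destruct (Arg_polar _ _ Hrs Hp) as [Hm Harg].
    split; [|exact Harg].
    assert (Ea : a = r / s * cos th) by (apply (Rmult_eq_reg_l s); [rewrite Ha; unfold r; field|]; lra).
    unfold tau_c. rewrite Harg, Hm.
    assert (Hc : a / (r / s) = cos th) by (rewrite Ea; field; lra).
    rewrite Hm in Ham.
    assert (Hcb : -1 <= cos psi) by apply COS_bound. simpl in Hre.
    rewrite sqrt_diff by (try split; nra). rewrite Hc, acos_cos by lra.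
    rewrite <- Htau. unfold r. field. lra.
  - intros [Hst Harg].
    assert (Hm : 0 < Cmod w) by (apply Cmod_gt_0; auto).
    set (m := Cmod w) in *.
    assert (Hpol := polar w Hw0). rewrite Harg in Hpol. fold m in Hpol.
    assert (Hx : Re w = m * cos psi) by (rewrite Hpol at 1; reflexivity).
    assert (Hy : Im w = m * sin psi) by (rewrite Hpol at 1; reflexivity).
    set (c := a / m).
    assert (Hcm : c * m = a) by (unfold c; field; lra).
    assert (Hcos1 : -1 <= cos psi) by apply COS_bound.
    assert (Hc1 : -1 < c < 1) by (rewrite Hx in Hre; split; nra).
    set (th := acos c).
    assert (Hth := acos_bound_lt _ Hc1). fold th in Hth.
    assert (Hcth : cos th = c) by (apply cos_acos; lra).
    assert (Hthp : th < Rabs psi).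
    { destruct (Rlt_le_dec th (Rabs psi)) as [h|h]; auto. exfalso.
      assert (cos th <= cos (Rabs psi)) by (apply cos_decr_1; lra).
      rewrite Hx in Hre. nra. }
    assert (Hsin : 0 < sin th) by (apply sin_gt_0; lra).
    assert (Hsq : sqrt (m ^ 2 - a ^ 2) = m * sin th) by (apply sqrt_diff; [lra| rewrite Hx in Hre; split; nra]).
    exists (s * m * sin th), th.
    split; [apply Rmult_lt_0_compat; [apply Rmult_lt_0_compat|]; lra|].
    split; [lra|].
    split.
    { rewrite Hst. unfold tau_c. rewrite Harg. fold m. rewrite Hsq. fold c. fold th. field.
      split; lra. }
    split.
    { rewrite Hcth, <- Hcm. field. lra. }
    rewrite Hpol at 1. unfold cexp_i. rewrite !Cmult_RtoC. f_equal; field; lra.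
Qed.

Theorem mainTheorem18 (psi tau : R) (Hpsi : -PI < psi <= PI) (Htau : 0 < tau)
  (a : R) (w : C) (HD : in_D_c a w) (s : R) (Hs : 0 < s) :
  in_Gamma_c psi tau (s * a) (RtoC s * w)%C <->
  (s = / tau * tau_c a w /\ Arg w = psi).
Proof.
  destruct (Req_dec psi 0) as [H0|H0].
  - subst psi. split.
    + intros [Om [HI _]]. unfold in_I_c in HI. lra.
    + intros [_ Harg]. exfalso. destruct HD as [Hw0 [Hre Ham]].
      assert (Hpol := polar w Hw0). rewrite Harg, cos_0 in Hpol.
      assert (Re w = Cmod w * 1) by (rewrite Hpol at 1; reflexivity). lra.
  - rewrite <- (core psi tau a s w Hpsi H0 Htau HD Hs).
    unfold in_Gamma_c, in_I_c, a_fun, rho_fun.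
    destruct (Rlt_le_dec 0 psi) as [Hp|Hn].
    + assert (Ha : Rabs psi = psi) by (apply Rabs_right; lra). rewrite Ha.
      split.
      * intros [Om [HI [Ha1 Hz]]].
        destruct HI as [[_ HI]|[HI _]]; [|lra].
        assert (HOm : 0 < Om) by nra.
        set (th := psi - tau * Om).
        assert (Hsin : 0 < sin th) by (apply sin_gt_0; unfold th; lra).
        replace (tau * Om - psi) with (- th) in * by (unfold th; ring).
        rewrite cos_neg, sin_neg in *.
        exists Om, th. split; [lra|]. split; [unfold th; lra|].
        split; [unfold th; ring|]. split.
        { rewrite Ha1. field. lra. }
        rewrite Hz. f_equal. f_equal. field. lra.
      * intros [Om [th [HOm [Hth [Ht [Ha1 Hz]]]]]].
        assert (Hsin : 0 < sin th) by (apply sin_gt_0; lra).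
        exists Om. split; [left; split; lra|].
        replace (tau * Om - psi) with (- th) by lra.
        rewrite cos_neg, sin_neg. split.
        { rewrite Ha1. field. lra. }
        rewrite Hz. f_equal. f_equal. field. lra.
    + assert (Hn' : psi < 0) by lra.
      assert (Ha : Rabs psi = - psi) by (apply Rabs_left; lra). rewrite Ha.
      split.
      * intros [Om [HI [Ha1 Hz]]].
        destruct HI as [[HI _]|[_ HI]]; [lra|].
        assert (HOm : Om < 0) by nra.
        set (th := tau * Om - psi).
        assert (Hsin : 0 < sin th) by (apply sin_gt_0; unfold th; lra).
        exists (- Om), th. split; [lra|]. split; [unfold th; lra|].
        split; [unfold th; ring|]. split; assumption.
      * intros [Om [th [HOm [Hth [Ht [Ha1 Hz]]]]]].
        assert (Hsin : 0 < sin th) by (apply sin_gt_0; lra).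
        exists (- Om). split; [right; split; lra|].
        replace (tau * - Om - psi) with th by lra.
        split.
        { rewrite Ha1. field. lra. }
        rewrite Hz. f_equal. f_equal. field. lra.
Qed.
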